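(* Let $G=(V,E,\Omega)$ be a connected finite graph with vertex set $V\subset\mathbb{R}^n$, edge set $E$ and a non-empty set $\Omega\subset V$, let $f:\Omega\to\mathbb{R}$, and let $u:V\to\mathbb{R}$ be the Kirszbraun extension of $f$ on $G$. Then $$\sup_{x,y\in V,\,x\neq y}\frac{|u(x)-u(y)|}{d_g(x,y)}\le\sup_{x,y\in\Omega,\,x\ne y}\frac{|f(x)-f(y)|}{d_g(x,y)},$$ and $\inf_{z\in\Omega}f(z)\le u(x)\le\sup_{z\in\Omega}f(z)$ for all $x\in V$.
   Context: For $x\in V$, $S(x):=\{y\in V:(x,y)\in E\}$; $\|\cdot\|$ is the Euclidean norm. For a finite set $A\subset\mathbb{R}^n$, $g:A\to\mathbb{R}$ and $x\in\mathbb{R}^n\setminus A$, $K(g,A)(x)$ is the unique $y\in\mathbb{R}$ minimizing $\sup_{a\in A}|g(a)-y|/\|a-x\|$. A Kirszbraun extension of $f$ on $G$ is a function $u:V\to\mathbb{R}$ with $u=f$ on $\Omega$ and $u(x)=K(u,S(x))(x)$ for all $x\in V\setminus\Omega$ (such $u$ exists and is unique in this real-valued setting). The geodesic metric $d_g$ of $G$: for $x,y\in V$, $d_g(x,y)$ is the infimum of $\sum_{i=1}^{k-1}\|x_{i+1}-x_i\|$ over all chains $x_1=x,x_2,\dots,x_k=y$ in $V$ with $x_i\in S(x_{i+1})$ for $i=1,\dots,k-1$. *)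

(* Defs.v *)
From HB Require Import structures.
From mathcomp Require Import all_boot all_order all_algebra.
From mathcomp Require Import classical_sets reals.
Set Implicit Arguments. Unset Strict Implicit. Unset Printing Implicit Defensive.
Import Order.TTheory GRing.Theory Num.Theory.
Local Open Scope ring_scope.
Local Open Scope classical_set_scope.

Definition normE {R : realType} {n : nat} (v : 'rV[R]_n) : R :=
  Num.sqrt (\sum_(i < n) (v ord0 i) ^+ 2).

(* The graph: vertices are a finType T, embedded injectively into R^n by pos;
   E is the edge relation; S(x) = {y | (x,y) \in E}. *)
Definition nbhd {T : finType} (E : rel T) (x : T) : {set T} := [set y | E x y].

Definition connected_simple_graph {T : finType} (E : rel T) : Prop :=
  (forall x y, E x y = E y x) /\ (forall x, ~~ E x x) /\
  (forall x y, connect E x y).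

(* sup_{a in A} |g(a) - y| / ||a - x|| (finite A; 0 if A is empty). *)
Definition Kobj {R : realType} {n : nat} {T : finType} (pos : T -> 'rV[R]_n)
  (g : T -> R) (A : {set T}) (x : T) (y : R) : R :=
  \big[Num.max/0]_(a in A) (`|g a - y| / normE (pos a - pos x)).

(* y = K(g,A)(x): y minimizes Kobj (the minimizer is unique). *)
Definition is_K {R : realType} {n : nat} {T : finType} (pos : T -> 'rV[R]_n)
  (g : T -> R) (A : {set T}) (x : T) (y : R) : Prop :=
  forall z : R, Kobj pos g A x y <= Kobj pos g A x z.

Definition kirszbraun_ext {R : realType} {n : nat} {T : finType}
  (pos : T -> 'rV[R]_n) (E : rel T) (Omega : {set T}) (f u : T -> R) : Prop :=
  (forall x, x \in Omega -> u x = f x) /\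
  (forall x, x \notin Omega -> is_K pos u (nbhd E x) x (u x)).

(* Length of the chain x = x_1, x_2, ..., x_k (p = [x_2; ...; x_k]). *)
Fixpoint chain_len {R : realType} {n : nat} {T : finType}
  (pos : T -> 'rV[R]_n) (x : T) (p : seq T) : R :=
  match p with
  | [::] => 0
  | y :: p' => normE (pos y - pos x) + chain_len pos y p'
  end.

(* Geodesic metric: inf over chains x_1 = x, ..., x_k = y with
   x_i \in S(x_{i+1}), i.e. E x_{i+1} x_i. *)
Definition dg {R : realType} {n : nat} {T : finType}
  (pos : T -> 'rV[R]_n) (E : rel T) (x y : T) : R :=
  inf [set l : R | exists p : seq T,
         [/\ path (fun a b => E b a) x p, last x p = y & l = chain_len pos x p]].

(* Lipschitz constant w.r.t. d_g on a vertex set W: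
   sup_{x,y in W, x <> y} |g x - g y| / d_g(x,y)  (0 for an empty index set). *)
Definition lip_dg {R : realType} {n : nat} {T : finType}
  (pos : T -> 'rV[R]_n) (E : rel T) (W : {set T}) (g : T -> R) : R :=
  sup [set q : R | exists x y, [/\ x \in W, y \in W, x != y &
         q = `|g x - g y| / dg pos E x y]].

(* Main.v *)
Require Import Defs.
From HB Require Import structures.
From mathcomp Require Import all_boot all_order all_algebra.
From mathcomp Require Import classical_sets reals.
From mathcomp Require Import lra.
Import Order.TTheory GRing.Theory Num.Theory.
Local Open Scope ring_scope.
Local Open Scope classical_set_scope.

Section Aux.
Variables (R : realType) (n : nat).

Lemma normE_ge0 (v : 'rV[R]_n) : 0 <= normE v.
Proof. exact: sqrtr_ge0. Qed.

Lemma normE_sym (v w : 'rV[R]_n) : normE (v - w) = normE (w - v).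
Proof.
rewrite /normE -opprB; congr Num.sqrt; apply: eq_bigr => i _.
by rewrite mxE sqrrN.
Qed.

Lemma normE_gt0 (v w : 'rV[R]_n) : v != w -> 0 < normE (v - w).
Proof.
move=> hvw; rewrite lt_neqAle normE_ge0 andbT eq_sym.
apply/negP => /eqP h; move: h; rewrite /normE => /eqP; rewrite sqrtr_eq0 => hle.
have h0 : \sum_(i < n) ((v - w) ord0 i) ^+ 2 = 0.
  by apply/eqP; rewrite eq_le hle sumr_ge0 // => i _; rewrite sqr_ge0.
have := psumr_eq0P (fun i _ => sqr_ge0 ((v - w) ord0 i)) h0.
move=> hall; move/negP: hvw; apply; apply/eqP/matrixP => i j.
rewrite (ord1 i); have := hall j isT; move/eqP; rewrite sqrf_eq0 !mxE subr_eq0.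
by move/eqP.
Qed.
End Aux.

Section Key.
Variables (R : realType) (n : nat) (T : finType) (pos : T -> 'rV[R]_n).

Lemma exists_max (P : pred T) (F : T -> R) x0 : P x0 ->
  exists2 z, P z & forall y, P y -> F y <= F z.
Proof.
move=> Px0.
have [z Pz hz] : exists2 z, P z & F z = \big[Order.max/F x0]_(i | P i) F i.
  apply: (big_ind (fun m => exists2 z, P z & F z = m)).
  - by exists x0.
  - move=> x y [zx Px <-] [zy Py <-]; rewrite maxEle.
    by case: ifP => _; [exists zy | exists zx].
  - by move=> i Pi; exists i.
by exists z => // y Py; rewrite hz; apply: le_bigmax_cond.
Qed.

Lemma exists_min (P : pred T) (F : T -> R) x0 : P x0 ->
  exists2 z, P z & forall y, P y -> F z <= F y.
Proof.
move=> Px0; have [z Pz h] := exists_max P (fun x => - F x) x0 Px0.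
exists z => // y /h.
by rewrite lerN2.
Qed.

Lemma Kobj_ge (g : T -> R) (A : {set T}) x y c : c \in A ->
  `|g c - y| / normE (pos c - pos x) <= Kobj pos g A x y.
Proof. by move=> hc; rewrite /Kobj; apply: (le_bigmax_cond _ _ hc). Qed.

Lemma Kobj_lt (g : T -> R) (A : {set T}) x y L : 0 < L ->
  (forall b, b \in A -> `|g b - y| / normE (pos b - pos x) < L) ->
  Kobj pos g A x y < L.
Proof.
move=> L0 h; rewrite /Kobj; apply: (big_ind (fun m => m < L)) => //.
by move=> a b ha hb; rewrite maxEle; case: ifP.
Qed.

Lemma Kobj_N (g : T -> R) A x y :
  Kobj pos (fun t => - g t) A x (- y) = Kobj pos g A x y.
Proof.
rewrite /Kobj; apply: eq_bigr => i _; congr (_ / _).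
by rewrite -opprD normrN.
Qed.

Lemma key (g : T -> R) (A : {set T}) (a c : T) (L : R) :
  0 < L -> is_K pos g A a (g a) -> c \in A ->
  g a - g c = L * normE (pos c - pos a) ->
  (forall b, b \in A -> `|g b - g a| <= L * normE (pos b - pos a)) ->
  (forall b, b \in A -> 0 < normE (pos b - pos a)) ->
  exists2 b, b \in A & g b - g a = L * normE (pos b - pos a).
Proof.
move=> L0 hK cA hc hb hd.
case: (boolP [exists b in A, g b - g a == L * normE (pos b - pos a)]).
  by move/exists_inP => [b bA /eqP]; exists b.
move/exists_inPn => hne.
pose D b := L * normE (pos b - pos a) - (g b - g a).
have Dpos : forall b, b \in A -> 0 < D b.
  move=> b bA; have := hb b bA; rewrite ler_norml => /andP [_ h1].
  have h2 := hne b bA; rewrite /D subr_gt0 lt_neqAle h1 andbT.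
  by apply/eqP => h; rewrite h eqxx in h2.
have [b0 b0A hmin] := exists_min (fun b => b \in A) D c cA.
have m0 := Dpos b0 b0A.
have := hK (g a - D b0 / 2).
have h1 : L <= Kobj pos g A a (g a).
  have hk := Kobj_ge g A a (g a) c cA.
  suff ht : L <= `|g c - g a| / normE (pos c - pos a) by exact: le_trans ht hk.
  rewrite distrC hc ger0_norm; last by rewrite mulr_ge0 ?ltW // hd.
  by rewrite mulfK // gt_eqF // hd.
have h2 : Kobj pos g A a (g a - D b0 / 2) < L.
  apply: Kobj_lt => // b bA; rewrite ltr_pdivrMr ?hd // ltr_norml.
  have := hb b bA; rewrite ler_norml => /andP [l1 l2].
  have := hmin b bA; rewrite /D => hm.
  move: m0; rewrite /D => m0'.
  apply/andP; split; lra.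
move=> h3; have := lt_le_trans h2 (le_trans h1 h3); by rewrite ltxx.
Qed.
End Key.

Section Main.
Variables (R : realType) (n : nat) (T : finType) (pos : T -> 'rV[R]_n) (E : rel T).
Hypothesis pos_inj : injective pos.
Hypothesis Esym : forall x y, E x y = E y x.
Hypothesis Eirr : forall x, ~~ E x x.
Hypothesis Econ : forall x y, connect E x y.

Lemma dpos {a b} : a != b -> 0 < normE (pos b - pos a).
Proof.
move=> hab; apply: normE_gt0; apply/negP => /eqP /pos_inj h.
by move: hab; rewrite h eqxx.
Qed.

Lemma Eneq {a b} : E a b -> a != b.
Proof. by move=> h; apply/negP => /eqP hab; move: h; rewrite hab (negbTE (Eirr b)). Qed.

Lemma nbhd_pos a [b] : b \in nbhd E a -> 0 < normE (pos b - pos a).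
Proof. by rewrite /nbhd inE => /Eneq; exact: dpos. Qed.

Lemma chain_ge0 x p : 0 <= chain_len pos x p.
Proof.
elim: p x => [|y p IH] x /=; first by [].
by rewrite addr_ge0 ?normE_ge0.
Qed.

Lemma dg_set_ne x y : exists l, exists p : seq T,
  [/\ path (fun a b => E b a) x p, last x p = y & l = chain_len pos x p].
Proof.
have /connectP [p hp hl] := Econ x y.
exists (chain_len pos x p), p; split => //.
elim: p x hp {hl} => [|z p IH] x //= /andP [h1 h2].
by rewrite -Esym h1 IH.
Qed.

Lemma dg_ge0 x y : 0 <= dg pos E x y.
Proof.
apply: lb_le_inf; first by have [l hl] := dg_set_ne x y; exists l.
by move=> l [p [_ _ ->]]; exact: chain_ge0.
Qed.

Lemma dg_le x y p : path (fun a b => E b a) x p -> last x p = y ->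
  dg pos E x y <= chain_len pos x p.
Proof.
move=> hp hl; apply: ge_inf; last by exists p.
by exists 0 => l [q [_ _ ->]]; exact: chain_ge0.
Qed.

Lemma dg_gt0 x y : x != y -> 0 < dg pos E x y.
Proof.
move=> hxy; have hyx : y != x by rewrite eq_sym.
have [bm hbm hmin] := @exists_min R T (fun b => b != x) (fun b => normE (pos b - pos x)) y hyx.
have hxb : x != bm by rewrite eq_sym.
apply: (lt_le_trans (dpos hxb)); apply: lb_le_inf.
  by have [l hl] := dg_set_ne x y; exists l.
move=> l [[|b p] [hp hl ->]] /=; first by move: hxy; rewrite -hl /= eqxx.
move: hp => /= /andP [hb _].
have := hmin b (Eneq hb); have := chain_ge0 b p => h1 h2.
by rewrite -[X in X <= _]addr0 lerD.
Qed.

Lemma lip_ub {W : {set T}} (g : T -> R) {x y} : x \in W -> y \in W -> x != y ->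
  `|g x - g y| / dg pos E x y <= lip_dg pos E W g.
Proof.
move=> hx hy hxy; apply: ub_le_sup; last by exists x, y.
have [pm _ hpm] := @exists_max R _ predT
  (fun p : T * T => `|g p.1 - g p.2| / dg pos E p.1 p.2) (x, y) isT.
by exists (`|g pm.1 - g pm.2| / dg pos E pm.1 pm.2) => _ [a [b [_ _ _ ->]]];
  exact: (hpm (a, b)).
Qed.

Lemma lip_ge0 (W : {set T}) (g : T -> R) : 0 <= lip_dg pos E W g.
Proof.
case: (boolP [exists p : T * T, [&& p.1 \in W, p.2 \in W & p.1 != p.2]]).
  move/existsP => [[x y] /and3P [hx hy hxy]].
  apply: le_trans (lip_ub g hx hy hxy).
  by rewrite divr_ge0 ?normr_ge0 ?dg_ge0.
move/existsPn => hn; rewrite /lip_dg.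
rewrite (_ : [set q | _] = set0) ?sup0 //.
apply/seteqP; split => q //= [x [y [hx hy hxy _]]].
by move: (hn (x, y)); rewrite /= hx hy hxy.
Qed.

Lemma lip_le (W : {set T}) (g : T -> R) L : 0 <= L ->
  (forall x y, x \in W -> y \in W -> x != y -> `|g x - g y| / dg pos E x y <= L) ->
  lip_dg pos E W g <= L.
Proof.
move=> L0 h.
case: (boolP [exists p : T * T, [&& p.1 \in W, p.2 \in W & p.1 != p.2]]).
  move/existsP => [[x y] /and3P [hx hy hxy]].
  apply: ge_sup; first by exists (`|g x - g y| / dg pos E x y), x, y.
  by move=> _ [a [b [ha hb hab ->]]]; exact: h.
move/existsPn => hn; rewrite /lip_dg.
rewrite (_ : [set q | _] = set0) ?sup0 //.
apply/seteqP; split => q //= [x [y [hx hy hxy _]]].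
by move: (hn (x, y)); rewrite /= hx hy hxy.
Qed.


Lemma maxp (Omega : {set T}) (f u : T -> R) :
  (exists z, z \in Omega) -> kirszbraun_ext pos E Omega f u ->
  forall x, exists2 z, z \in Omega & u x <= f z.
Proof.
move=> [z0 hz0] [hOm hK] x.
have [zM hzM hfM] := @exists_max R T (fun z => z \in Omega) f z0 hz0.
have [xm _ hum] := @exists_max R T predT u x isT.
exists zM => //.
apply: le_trans (hum x isT) _.
rewrite leNgt; apply/negP => hlt.
have notO : forall y, u y = u xm -> y \notin Omega.
  move=> y hy; apply/negP => hyO.
  have := hfM y hyO; rewrite -(hOm y hyO) hy => h.
  by move: (lt_le_trans hlt h); rewrite ltxx.
have nb : forall y w, u y = u xm -> E y w -> u w = u xm.
  move=> y w hy hyw.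
  have hwA : w \in nbhd E y by rewrite /nbhd inE.
  pose F b := `|u b - u y| / normE (pos b - pos y).
  have [c hcA hcmax] := @exists_max R T (fun b => b \in nbhd E y) F w hwA.
  have Fc0 : F c <= 0.
    rewrite leNgt; apply/negP => hFc.
    have hcd := nbhd_pos _ hcA.
    have hc : u y - u c = F c * normE (pos c - pos y).
      rewrite /F divfK ?gt_eqF // distrC ger0_norm // subr_ge0 hy.
      exact: hum.
    have hsl : forall b, b \in nbhd E y ->
        `|u b - u y| <= F c * normE (pos b - pos y).
      move=> b hbA; have := hcmax b hbA; rewrite /F ler_pdivrMr //.
      exact: nbhd_pos.
    have [b hbA hb] := @key _ _ _ pos u (nbhd E y) y c (F c) hFc
      (hK y (notO y hy)) hcA hc hsl (nbhd_pos y).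
    have : 0 < u b - u y by rewrite hb mulr_gt0 // nbhd_pos.
    rewrite subr_gt0 hy => h; have := lt_le_trans h (hum b isT).
    by rewrite ltxx.
  have := hcmax w hwA => hw.
  have := le_trans hw Fc0; rewrite /F ler_pdivrMr ?nbhd_pos // mul0r.
  rewrite normr_le0 subr_eq0 => /eqP ->; exact: hy.
have hpath : forall q a, u a = u xm -> path E a q -> u (last a q) = u xm.
  elim=> [|c q IH] a //= ha /andP [hac hq].
  exact: IH c (nb a c ha hac) hq.
have /connectP [q hq hl] := Econ xm zM.
have hz := hpath q xm erefl hq; rewrite -hl in hz.
by move: (notO zM hz); rewrite hzM.
Qed.


Lemma lip_main (Omega : {set T}) (f u : T -> R) :
  kirszbraun_ext pos E Omega f u ->
  lip_dg pos E [set: T] u <= lip_dg pos E Omega f.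
Proof.
move=> [hOm hK].
pose F (p : T * T) := `|u p.2 - u p.1| / normE (pos p.2 - pos p.1).
pose L := \big[Order.max/0]_(p : T * T | E p.1 p.2) F p.
have Fge0 p : 0 <= F p by rewrite divr_ge0 ?normr_ge0 ?normE_ge0.
have L0 : 0 <= L.
  rewrite /L; apply: (big_ind (fun m => 0 <= m)) => //.
  by move=> a b ha hb; rewrite maxEle; case: ifP.
have slope a b : E a b -> `|u b - u a| <= L * normE (pos b - pos a).
  move=> hab.
  have := @le_bigmax_cond _ _ _ 0 (a, b) (fun p : T * T => E p.1 p.2) F hab.
  by rewrite /F /= ler_pdivrMr // dpos // Eneq.
have hch : forall p x, path (fun a b => E b a) x p ->
    `|u (last x p) - u x| <= L * chain_len pos x p.
  elim=> [|z p IH] x /=; first by rewrite subrr normr0 mulr0.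
  move=> /andP [hzx hp].
  have h1 := slope x z (etrans (Esym x z) hzx).
  have h2 := IH z hp.
  have -> : u (last z p) - u x = (u (last z p) - u z) + (u z - u x) by lra.
  apply: le_trans (ler_normD _ _) _; rewrite mulrDr addrC; exact: lerD.
apply: (@le_trans _ _ L).
  apply: lip_le => // x y _ _ hxy.
  have key2 : `|u y - u x| <= L * dg pos E x y.
    have [L0e|Lne] := eqVneq L 0.
      have [l [p [hp hl _]]] := dg_set_ne x y.
      have := hch p x hp; rewrite hl => h.
      by move: h; rewrite L0e !mul0r.
    have Lpos : 0 < L by rewrite lt_neqAle eq_sym Lne L0.
    rewrite mulrC -ler_pdivrMr //; apply: lb_le_inf.
      by have [l hl] := dg_set_ne x y; exists l.
    move=> l [p [hp hl ->]]; rewrite ler_pdivrMr // mulrC -hl.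
    exact: hch.
  by rewrite distrC ler_pdivrMr ?dg_gt0 // mulrC.
have [->|Lne] := eqVneq L 0; first exact: lip_ge0.
have Lpos : 0 < L by rewrite lt_neqAle eq_sym Lne L0.
have : L = 0 \/ exists2 p : T * T, E p.1 p.2 & F p = L.
  rewrite /L; apply: (big_ind (fun m => m = 0 \/ exists2 p : T * T, E p.1 p.2 & F p = m)).
  - by left.
  - by move=> a b ha hb; rewrite maxEle; case: ifP.
  - by move=> p hp; right; exists p.
case => [L0'|[p hp hFp]]; first by rewrite L0' eqxx in Lne.
have [x0 [y0 [hE0 hs0]]] : exists x0 y0, E x0 y0 /\ u y0 - u x0 = L * normE (pos y0 - pos x0).
  have hd : 0 < normE (pos p.2 - pos p.1) by rewrite dpos // Eneq.
  have habs : `|u p.2 - u p.1| = L * normE (pos p.2 - pos p.1).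
    by rewrite -hFp /F divfK // gt_eqF.
  case: (leP (u p.1) (u p.2)) => hle.
    by exists p.1, p.2; split => //; rewrite -habs ger0_norm // subr_ge0.
  exists p.2, p.1; split; first by rewrite Esym.
  by rewrite normE_sym -habs ltr0_norm ?subr_lt0 // opprB.
pose st := fun a b => E a b && (u b - u a == L * normE (pos b - pos a)).
have st_lt a b : st a b -> u a < u b.
  move=> /andP [hab /eqP h]; rewrite -subr_gt0 h mulr_gt0 // dpos // Eneq //.
have cle a b : connect st a b -> u a <= u b.
  move/connectP => [q hq ->]; elim: q a hq => [|c q IH] a /=; first by [].
  move=> /andP [hac hq]; exact: le_trans (ltW (st_lt _ _ hac)) (IH c hq).
have out a c : a \notin Omega -> st c a -> exists b, st a b.
  move=> haO /andP [hca /eqP hs].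
  have hcA : c \in nbhd E a by rewrite /nbhd inE Esym.
  have hc : u a - u c = L * normE (pos c - pos a) by rewrite normE_sym.
  have hsl : forall b, b \in nbhd E a -> `|u b - u a| <= L * normE (pos b - pos a).
    by move=> b; rewrite /nbhd inE; exact: slope.
  have [b hbA hb] := @key _ _ _ pos u (nbhd E a) a c L Lpos (hK a haO) hcA hc hsl
    (nbhd_pos a).
  exists b; rewrite /st; move: hbA; rewrite /nbhd inE => ->; by rewrite hb eqxx.
have inc a b : a \notin Omega -> st a b -> exists c, st c a.
  move=> haO /andP [hab /eqP hs].
  have hKN : is_K pos (fun t => - u t) (nbhd E a) a (- u a).
    move=> z; rewrite Kobj_N -[z]opprK Kobj_N; exact: hK.
  have hbA : b \in nbhd E a by rewrite /nbhd inE.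
  have hc : - u a - - u b = L * normE (pos b - pos a) by rewrite opprK addrC.
  have hsl : forall b, b \in nbhd E a ->
      `|- u b - - u a| <= L * normE (pos b - pos a).
    by move=> b' hb'; rewrite opprK addrC distrC; apply: slope; move: hb'; rewrite /nbhd inE.
  have [c hcA hcc] := @key _ _ _ pos (fun t => - u t) (nbhd E a) a b L Lpos hKN hbA hc hsl
    (nbhd_pos a).
  exists c; rewrite /st; move: hcA; rewrite /nbhd inE Esym => ->.
  by rewrite -normE_sym -hcc /= opprK addrC.
pose P2 := fun z => connect st y0 z && [exists w, st w z].
have st0 : st x0 y0 by rewrite /st hE0 hs0 eqxx.
have hy0 : P2 y0 by rewrite /P2 connect0 /=; apply/existsP; exists x0.
have [z2 hz2 hmax] := @exists_max R T P2 u y0 hy0.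
have z2O : z2 \in Omega.
  apply/negPn/negP => hO; case/andP: hz2 => hc2 /existsP [w hw].
  have [b hb] := out z2 w hO hw.
  have : P2 b by rewrite /P2 (connect_trans hc2 (connect1 hb)) /=; apply/existsP; exists z2.
  move/hmax => h2; have := lt_le_trans (st_lt _ _ hb) h2; by rewrite ltxx.
pose P1 := fun z => connect st z x0 && [exists w, st z w].
have hx0 : P1 x0 by rewrite /P1 connect0 /=; apply/existsP; exists y0.
have [z1 hz1 hmin] := @exists_min R T P1 u x0 hx0.
have z1O : z1 \in Omega.
  apply/negPn/negP => hO; case/andP: hz1 => hc1 /existsP [w hw].
  have [c hc] := inc z1 w hO hw.
  have : P1 c by rewrite /P1 (connect_trans (connect1 hc) hc1) /=; apply/existsP; exists z1.
  move/hmin => h2; have := lt_le_trans (st_lt _ _ hc) h2; by rewrite ltxx.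
case/andP: hz1 => c1 _; case/andP: hz2 => c2 _.
have hconn : connect st z1 z2 := connect_trans (connect_trans c1 (connect1 st0)) c2.
have hlt : u z1 < u z2.
  exact: le_lt_trans (cle _ _ c1) (lt_le_trans (st_lt _ _ st0) (cle _ _ c2)).
have hne : z1 != z2 by apply/negP => /eqP e; rewrite e ltxx in hlt.
have [r hr hl] := connectP hconn.
have hpath : forall q a, path st a q ->
    u (last a q) - u a = L * chain_len pos a q /\ path (fun a b => E b a) a q.
  elim=> [|c q IH] a /=; first by rewrite subrr mulr0.
  move=> /andP [/andP [hac /eqP hs] hq']; have [h1 h2] := IH c hq'; split.
    have -> : u (last c q) - u a = (u (last c q) - u c) + (u c - u a) by lra.
    by rewrite h1 hs mulrDr addrC.
  by rewrite Esym hac h2.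
have [hdiff hp'] := hpath r z1 hr.
have hdiff' : u z2 - u z1 = L * chain_len pos z1 r by rewrite hl.
have hdg := dg_le _ _ _ hp' (esym hl).
have hdgp := dg_gt0 _ _ hne.
apply: le_trans (lip_ub f z1O z2O hne).
rewrite -(hOm z1 z1O) -(hOm z2 z2O) distrC ger0_norm; last by rewrite subr_ge0 ltW.
by rewrite ler_pdivlMr // hdiff' ler_wpM2l // ltW.
Qed.

End Main.

Lemma kext_N (R : realType) (n : nat) (T : finType) (pos : T -> 'rV[R]_n)
  (E : rel T) (Omega : {set T}) (f u : T -> R) :
  kirszbraun_ext pos E Omega f u ->
  kirszbraun_ext pos E Omega (fun t => - f t) (fun t => - u t).
Proof.
move=> [hO hK]; split; first by move=> x /hO /= ->.
move=> x hx z; rewrite Kobj_N -[z]opprK Kobj_N; exact: hK.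
Qed.

Theorem mainTheorem4 (R : realType) (n : nat) (T : finType)
  (pos : T -> 'rV[R]_n) (E : rel T) (Omega : {set T}) (f u : T -> R) :
  injective pos ->
  connected_simple_graph E ->
  (exists z, z \in Omega) ->
  kirszbraun_ext pos E Omega f u ->
  lip_dg pos E [set: T] u <= lip_dg pos E Omega f /\
  (forall x : T,
     inf [set f z | z in [set z | z \in Omega]] <= u x /\
     u x <= sup [set f z | z in [set z | z \in Omega]]).
Proof.
move=> inj [Es [Ei Ec]] hex hk; split.
  exact: (@lip_main R n T pos E inj Es Ei Ec Omega f u hk).
move=> x; split.
  have [z hz hle] := @maxp R n T pos E inj Ei Ec Omega _ _ hex (@kext_N R n T pos E Omega f u hk) x.
  rewrite lerN2 in hle.
  apply: le_trans hle; apply: ge_inf; last by exists z.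
  have [zm _ hzm] := @exists_min R T predT f x isT.
  by exists (f zm) => _ [z' _ <-]; exact: hzm.
have [z hz hle] := @maxp R n T pos E inj Ei Ec Omega f u hex hk x.
apply: le_trans hle _; apply: ub_le_sup; last by exists z.
have [zm _ hzm] := @exists_max R T predT f x isT.
by exists (f zm) => _ [z' _ <-]; exact: hzm.
Qed.
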